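(* Let $W$ be a graphon satisfying the Regularity Condition. For every $y\in(0,1)$ there exists $C>0$ such that for all $n\ge2$ and $u\in[0,1]$, with $d=D(y)$, $$H_n(y,u)=\frac{d-W(y,u)}{D'(y)}+R_n(u),\qquad |R_n(u)|\le Cn^{-1/4}.$$ Moreover, for all $y\in(0,1)$ and $u\in[0,1]$ with $u\ne y$: $|H_n^\star(y,u)|\le1$ for all $n\ge2$, and $\lim_{n\to\infty}H_n^\star(y,u)=\mathbf 1_{\{u\le y\}}-y$.
   Context: A graphon is a symmetric measurable $W:[0,1]^2\to[0,1]$; $D(x)=\int_0^1W(x,y)dy$. Regularity Condition: $W\in\mathcal{C}^3([0,1]^2)$, $D'>0$, $W\le1-\varepsilon_0$ and $D\ge\varepsilon_0$ for some $\varepsilon_0\in(0,1/2)$. $X=(X_i)$ i.i.d. uniform; $G_n$ is the graph on $[n]$ where, conditionally on $X$, $\{i,j\}$ is an edge independently with probability $W(X_i,X_j)$; $D_i^{(n)}$ is the degree of $i$ in $G_n$ divided by $n-1$. With $d=D(y)$: $c_n(y)=\mathbb P(D_1^{(n+1)}\le d)$, $H_n(y,u)=n\big(\mathbb E[\mathbf 1_{\{D_1^{(n+1)}\le d\}}\mid X_2=u]-c_n(y)\big)$, $H_n^\star(y,u)=\mathbb E[\mathbf 1_{\{D_1^{(n+1)}\le d\}}\mid X_1=u]-c_n(y)$. *)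

(* Defs.v *)
From Stdlib Require Import Reals List Arith.
From Coquelicot Require Import Coquelicot.
Open Scope R_scope.

(* A graphon is represented by a function W : R -> R -> R; only its values
   on [0,1]^2 are relevant for the graphon axioms. *)
Definition graphon (W : R -> R -> R) : Prop :=
  (forall x y, 0 <= x <= 1 -> 0 <= y <= 1 -> W x y = W y x) /\
  (forall x y, 0 <= x <= 1 -> 0 <= y <= 1 -> 0 <= W x y <= 1).

Definition Dfun (W : R -> R -> R) (x : R) : R := RInt (fun y => W x y) 0 1.

Definition pd (b : bool) (f : R -> R -> R) : R -> R -> R :=
  if b then fun x y => Derive (fun t => f t y) x
  else fun x y => Derive (fun t => f x t) y.

Definition iter_pd (s : list bool) (f : R -> R -> R) : R -> R -> R :=
  fold_right pd f s.

Definition C3 (f : R -> R -> R) : Prop :=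
  forall s : list bool, (length s <= 3)%nat ->
    (forall x y, continuous (fun p : R * R => iter_pd s f (fst p) (snd p)) (x, y)) /\
    ((length s < 3)%nat -> forall x y,
        ex_derive (fun t => iter_pd s f t y) x /\
        ex_derive (fun t => iter_pd s f x t) y).

Definition regularity_condition (W : R -> R -> R) : Prop :=
  C3 W /\
  (forall x, 0 <= x <= 1 -> 0 < Derive (Dfun W) x) /\
  exists eps0, 0 < eps0 < 1/2 /\
    (forall x y, 0 <= x <= 1 -> 0 <= y <= 1 -> W x y <= 1 - eps0) /\
    (forall x, 0 <= x <= 1 -> eps0 <= Dfun W x).

(* update of a latent-position vector (indexed by nat, vertices 1..m) *)
Definition upd (x : nat -> R) (i : nat) (t : R) : nat -> R :=
  fun j => if Nat.eqb j i then t else x j.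

(* iterated integral over [0,1] of the coordinates listed in l
   (X_i i.i.d. uniform on [0,1]) *)
Fixpoint iint (l : list nat) (F : (nat -> R) -> R) (x : nat -> R) : R :=
  match l with
  | nil => F x
  | i :: l' => RInt (fun t => iint l' F (upd x i t)) 0 1
  end.

Fixpoint cfgs (m : nat) : list (list bool) :=
  match m with
  | O => nil :: nil
  | S m' => flat_map (fun c => (true :: c) :: (false :: c) :: nil) (cfgs m')
  end.

Definition sumR (l : list R) : R := fold_right Rplus 0 l.

(* probability of a given configuration c of the edges {1, j}, j = k, k+1, ...,
   conditionally on the latent positions x *)
Fixpoint cfg_prob (W : R -> R -> R) (x : nat -> R) (k : nat) (c : list bool) : R :=
  match c with
  | nil => 1
  | b :: c' =>
      (if b then W (x 1%nat) (x k) else 1 - W (x 1%nat) (x k))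
      * cfg_prob W x (S k) c'
  end.

Definition ntrue (c : list bool) : nat := length (filter (fun b => b) c).

(* P( D_1^{(n+1)} <= d | X = x ) in the graph G_{n+1} on vertices 1..n+1:
   the edges {1,j}, j = 2..n+1, are independent Bernoulli(W(x_1,x_j)),
   and D_1^{(n+1)} = deg(1) / n. *)
Definition condP (W : R -> R -> R) (n : nat) (d : R) (x : nat -> R) : R :=
  sumR (map (fun c => cfg_prob W x 2 c *
                      (if Rle_dec (INR (ntrue c) / INR n) d then 1 else 0))
            (cfgs n)).

Definition x0 : nat -> R := fun _ => 0.

(* c_n(y) = P(D_1^{(n+1)} <= D(y)) *)
Definition c_n (W : R -> R -> R) (n : nat) (y : R) : R :=
  iint (seq 1 (S n)) (condP W n (Dfun W y)) x0.

(* E[ 1{D_1^{(n+1)} <= D(y)} | X_2 = u ] *)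
Definition condE_X2 (W : R -> R -> R) (n : nat) (y u : R) : R :=
  iint (1%nat :: seq 3 (n - 1)) (condP W n (Dfun W y)) (upd x0 2 u).

(* E[ 1{D_1^{(n+1)} <= D(y)} | X_1 = u ] *)
Definition condE_X1 (W : R -> R -> R) (n : nat) (y u : R) : R :=
  iint (seq 2 n) (condP W n (Dfun W y)) (upd x0 1 u).

Definition H_n (W : R -> R -> R) (n : nat) (y u : R) : R :=
  INR n * (condE_X2 W n y u - c_n W n y).

Definition H_n_star (W : R -> R -> R) (n : nat) (y u : R) : R :=
  condE_X1 W n y u - c_n W n y.

(* Main.v *)
Require Import Defs.
From Stdlib Require Import Reals List Arith Lia Lra.
From Coquelicot Require Import Coquelicot.
Open Scope R_scope.

Fixpoint Gs (js : list nat) (p : nat -> R) (g : nat -> R) : R :=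
  match js with
  | nil => g 0%nat
  | j :: js' => p j * Gs js' p (fun k => g (S k)) + (1 - p j) * Gs js' p g
  end.

Fixpoint Bm (m : nat) (p : R) (g : nat -> R) : R :=
  match m with
  | O => g 0%nat
  | S m' => p * Bm m' p (fun k => g (S k)) + (1 - p) * Bm m' p g
  end.

Definition pupd (p : nat -> R) (i : nat) (v : R) : nat -> R :=
  fun j => if Nat.eqb j i then v else p j.

Lemma Gs_ext js : forall p p' g g', (forall j, In j js -> p j = p' j) ->
  (forall k, g k = g' k) -> Gs js p g = Gs js p' g'.
Proof.
  induction js as [|j js IH]; intros p p' g g' Hp Hg; simpl; auto.
  rewrite (Hp j (or_introl eq_refl)).
  rewrite (IH p p' (fun k => g (S k)) (fun k => g' (S k))); auto.
  rewrite (IH p p' g g'); auto.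
  all: intros; apply Hp; simpl; auto.
Qed.

Lemma Gs_const js : forall p c g, (forall j, In j js -> p j = c) ->
  Gs js p g = Bm (length js) c g.
Proof.
  induction js as [|j js IH]; intros p c g Hp; simpl; auto.
  rewrite (Hp j) by (simpl; auto).
  rewrite (IH p c (fun k => g (S k))) by (intros; apply Hp; simpl; auto).
  rewrite (IH p c g) by (intros; apply Hp; simpl; auto). auto.
Qed.

Lemma Gs_notin js : forall p i v g, ~ In i js -> Gs js (pupd p i v) g = Gs js p g.
Proof.
  intros; apply Gs_ext; auto. intros j Hj. unfold pupd.
  destruct (Nat.eqb_spec j i); subst; tauto.
Qed.

Lemma Gs_affine js : forall p i g v, NoDup js ->
  Gs js (pupd p i v) g = Gs js (pupd p i 0) g + v * (Gs js (pupd p i 1) g - Gs js (pupd p i 0) g).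
Proof.
  induction js as [|j js IH]; intros p i g v Hnd; simpl. ring.
  inversion Hnd; subst.
  destruct (Nat.eqb_spec j i).
  - subst. assert (E: forall w, pupd p i w i = w) by (intro; unfold pupd; rewrite Nat.eqb_refl; auto).
    rewrite !E. rewrite !Gs_notin by auto. ring.
  - assert (E: forall w, pupd p i w j = p j) by (intro; unfold pupd; destruct (Nat.eqb_spec j i); tauto).
    rewrite !E. rewrite (IH p i (fun k => g (S k)) v), (IH p i g v) by auto. ring.
Qed.

Lemma Gs_int js : forall p i g f, NoDup js -> ex_RInt f 0 1 ->
  RInt (fun t => Gs js (pupd p i (f t)) g) 0 1 = Gs js (pupd p i (RInt f 0 1)) g.
Proof.
  intros p i g f Hnd Hf.
  rewrite (Gs_affine js p i g (RInt f 0 1)) by auto.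
  set (A := Gs js (pupd p i 0) g). set (B := Gs js (pupd p i 1) g - A).
  rewrite (RInt_ext _ (fun t => plus A (scal B (f t)))).
  2:{ intros x _. rewrite (Gs_affine js p i g (f x)) by auto. fold A. fold B.
      unfold plus, scal; simpl; unfold mult; simpl. ring. }
  rewrite (RInt_plus (V:=R_CompleteNormedModule) (fun _ => A) (fun t => scal B (f t))).
  - rewrite RInt_const, (RInt_scal (V:=R_CompleteNormedModule)) by auto. unfold plus, scal; simpl; unfold mult; simpl. ring.
  - apply ex_RInt_const.
  - apply ex_RInt_scal; auto.
Qed.
Lemma sumR_lin {A} (L : list A) (F G : A -> R) a b :
  sumR (map (fun c => a * F c + b * G c) L) = a * sumR (map F L) + b * sumR (map G L).
Proof. induction L; simpl; [ring|]. rewrite IHL. ring. Qed.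

Lemma sumR_flat {A} (L : list A) (f : A -> R) (h : A -> list A) :
  sumR (map f (flat_map h L)) = sumR (map (fun c => sumR (map f (h c))) L).
Proof. induction L; simpl; auto. rewrite map_app.
  assert (forall l1 l2, sumR (l1 ++ l2) = sumR l1 + sumR l2).
  { induction l1; simpl; intros; [ring|]. rewrite IHl1; ring. }
  rewrite H, IHL. auto. Qed.

Lemma cfgs_G W x : forall m k g,
  sumR (map (fun c => cfg_prob W x k c * g (ntrue c)) (cfgs m)) =
  Gs (seq k m) (fun j => W (x 1%nat) (x j)) g.
Proof.
  induction m as [|m IH]; intros k g; simpl. unfold ntrue; simpl; ring.
  rewrite sumR_flat.
  rewrite (map_ext _ (fun c => W (x 1%nat) (x k) * (cfg_prob W x (S k) c * g (S (ntrue c)))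
                              + (1 - W (x 1%nat) (x k)) * (cfg_prob W x (S k) c * g (ntrue c)))).
  2:{ intros c. simpl. unfold ntrue. simpl. ring. }
  rewrite sumR_lin. rewrite (IH (S k) (fun j => g (S j))). rewrite IH. auto.
Qed.

Definition gf (n : nat) (d : R) : nat -> R :=
  fun j => if Rle_dec (INR j / INR n) d then 1 else 0.

Lemma condP_eq W n d x : condP W n d x = Gs (seq 2 n) (fun j => W (x 1%nat) (x j)) (gf n d).
Proof. unfold condP. apply (cfgs_G W x n 2 (gf n d)). Qed.

Lemma iint_ext l : forall F F' x, (forall x, F x = F' x) -> iint l F x = iint l F' x.
Proof. induction l; intros; simpl; auto. apply RInt_ext; intros; auto. Qed.

Lemma iint_G W g js (Hnd : NoDup js) (HWc : forall a, ex_RInt (fun t => W a t) 0 1) :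
  forall l x, NoDup l -> ~ In 1%nat l ->
  iint l (fun x => Gs js (fun j => W (x 1%nat) (x j)) g) x =
  Gs js (fun j => if in_dec Nat.eq_dec j l then Dfun W (x 1%nat) else W (x 1%nat) (x j)) g.
Proof.
  induction l as [|i l IH]; intros x Hl H1; cbn [iint].
  - apply Gs_ext; auto.
  - inversion Hl; subst.
    assert (Hi1 : i <> 1%nat) by (intro; subst; apply H1; simpl; auto).
    assert (H1' : ~ In 1%nat l) by (intro; apply H1; simpl; auto).
    rewrite (RInt_ext _ (fun t => Gs js (pupd (fun j => if in_dec Nat.eq_dec j l then Dfun W (x 1%nat) else W (x 1%nat) (x j)) i (W (x 1%nat) t)) g)).
    2:{ intros t _. rewrite IH by auto. apply Gs_ext; auto. intros j _.
        unfold upd, pupd. assert (E: Nat.eqb 1 i = false) by (apply Nat.eqb_neq; auto).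
        rewrite E. destruct (Nat.eqb_spec j i).
        - subst. destruct (in_dec Nat.eq_dec i l); tauto.
        - destruct (in_dec Nat.eq_dec j l); auto. }
    rewrite Gs_int by auto. apply Gs_ext; auto. intros j _. unfold pupd.
    destruct (in_dec Nat.eq_dec j (i :: l)) as [Hin|Hnin]; destruct (Nat.eqb_spec j i).
    + subst. reflexivity.
    + destruct (in_dec Nat.eq_dec j l); auto. destruct Hin; [congruence|tauto].
    + subst. exfalso; apply Hnin; simpl; auto.
    + destruct (in_dec Nat.eq_dec j l); auto. exfalso; apply Hnin; simpl; auto.
Qed.

Section Formulas.
Variable W : R -> R -> R.
Hypothesis HWc : forall a, ex_RInt (fun t => W a t) 0 1.

Lemma c_n_eq n y : c_n W n y = RInt (fun t => Bm n (Dfun W t) (gf n (Dfun W y))) 0 1.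
Proof.
  unfold c_n. change (seq 1 (S n)) with (1%nat :: seq 2 n). cbn [iint].
  apply RInt_ext; intros t _.
  rewrite (iint_ext _ _ (fun x => Gs (seq 2 n) (fun j => W (x 1%nat) (x j)) (gf n (Dfun W y)))) by (intro; apply condP_eq).
  rewrite iint_G; auto using seq_NoDup.
  2:{ rewrite in_seq. lia. }
  rewrite (Gs_const _ _ (Dfun W t)). rewrite length_seq. auto.
  intros j Hj. destruct (in_dec Nat.eq_dec j (seq 2 n)); [|tauto]. reflexivity.
Qed.

Lemma condE_X1_eq n y u : condE_X1 W n y u = Bm n (Dfun W u) (gf n (Dfun W y)).
Proof.
  unfold condE_X1.
  rewrite (iint_ext _ _ (fun x => Gs (seq 2 n) (fun j => W (x 1%nat) (x j)) (gf n (Dfun W y)))) by (intro; apply condP_eq).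
  rewrite iint_G; auto using seq_NoDup.
  2:{ rewrite in_seq. lia. }
  rewrite (Gs_const _ _ (Dfun W u)). rewrite length_seq. auto.
  intros j Hj. destruct (in_dec Nat.eq_dec j (seq 2 n)); [|tauto]. reflexivity.
Qed.

Lemma condE_X2_eq m y u : condE_X2 W (S m) y u =
  RInt (fun t => W t u * Bm m (Dfun W t) (fun k => gf (S m) (Dfun W y) (S k))
               + (1 - W t u) * Bm m (Dfun W t) (gf (S m) (Dfun W y))) 0 1.
Proof.
  unfold condE_X2. replace (S m - 1)%nat with m by lia. cbn [iint].
  apply RInt_ext; intros t _.
  rewrite (iint_ext _ _ (fun x => Gs (seq 2 (S m)) (fun j => W (x 1%nat) (x j)) (gf (S m) (Dfun W y)))) by (intro; apply condP_eq).
  rewrite iint_G; auto using seq_NoDup.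
  2:{ rewrite in_seq. lia. }
  change (seq 2 (S m)) with (2%nat :: seq 3 m). cbn [Gs].
  destruct (in_dec Nat.eq_dec 2%nat (seq 3 m)) as [Hin|_].
  { rewrite in_seq in Hin. lia. }
  rewrite !(Gs_const _ _ (Dfun W t)). rewrite length_seq. reflexivity.
  all: intros j Hj; destruct (in_dec Nat.eq_dec j (seq 3 m)); [reflexivity|tauto].
Qed.
End Formulas.

Lemma Bm_ext m : forall p g g', (forall k, g k = g' k) -> Bm m p g = Bm m p g'.
Proof. induction m; intros p g g' H; simpl; auto.
  rewrite (IHm p (fun k => g (S k)) (fun k => g' (S k))), (IHm p g g'); auto. Qed.

Lemma Bm_lin m : forall p g g' a b,
  Bm m p (fun k => a * g k + b * g' k) = a * Bm m p g + b * Bm m p g'.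
Proof. induction m; intros; simpl; auto.
  rewrite (IHm p (fun k => g (S k)) (fun k => g' (S k))), IHm. ring. Qed.

Lemma Bm_const m : forall p c, Bm m p (fun _ => c) = c.
Proof. induction m; intros; simpl; auto. rewrite !IHm. ring. Qed.

Lemma Bm_scal m p g a : Bm m p (fun k => a * g k) = a * Bm m p g.
Proof. rewrite (Bm_ext m p _ (fun k => a * g k + 0 * g k)) by (intro; ring).
  rewrite Bm_lin. ring. Qed.

Lemma Bm_mono m : forall p g g', 0 <= p <= 1 -> (forall k, g k <= g' k) -> Bm m p g <= Bm m p g'.
Proof. induction m; intros p g g' Hp H; simpl; auto.
  pose proof (IHm p (fun k => g (S k)) (fun k => g' (S k)) Hp (fun k => H (S k))).
  pose proof (IHm p g g' Hp H). nra. Qed.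

Lemma Bm_mom1 m : forall p a, Bm m p (fun k => INR k + a) = INR m * p + a.
Proof. induction m; intros; cbn [Bm]. simpl; ring.
  rewrite (Bm_ext m p _ (fun k => INR k + (a + 1))) by (intro; rewrite S_INR; ring).
  rewrite !IHm. rewrite S_INR. ring. Qed.

Lemma Bm_mom2 m : forall p a, Bm m p (fun k => (INR k + a)^2) = (INR m * p + a)^2 + INR m * p * (1 - p).
Proof. induction m; intros; cbn [Bm]. simpl; ring.
  rewrite (Bm_ext m p _ (fun k => (INR k + (a + 1))^2)) by (intro; rewrite S_INR; ring).
  rewrite !IHm. rewrite S_INR. ring. Qed.

Lemma Bm_range m : forall p g, 0 <= p <= 1 -> (forall k, 0 <= g k <= 1) -> 0 <= Bm m p g <= 1.
Proof. intros p g Hp Hg. split.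
  - rewrite <- (Bm_const m p 0). apply Bm_mono; auto. intro k; apply Hg.
  - apply Rle_trans with (Bm m p (fun _ => 1)); [|rewrite Bm_const; lra].
    apply Bm_mono; auto. intro k; apply Hg. Qed.

Lemma gf_range n d k : 0 <= gf n d k <= 1.
Proof. unfold gf; destruct Rle_dec; lra. Qed.

Lemma cheb_hi n p d : (0 < n)%nat -> 0 <= p <= 1 -> d < p ->
  Bm n p (gf n d) <= / (4 * INR n * (p - d)^2).
Proof.
  intros Hn Hp Hd. assert (HN : 0 < INR n) by (apply lt_0_INR; lia).
  set (c := INR n * (p - d)). assert (Hc : 0 < c) by (unfold c; nra).
  apply Rle_trans with (Bm n p (fun k => / c^2 * (INR k + - (INR n * p))^2)).
  - apply Bm_mono; auto. intro k. unfold gf. destruct Rle_dec as [H|H].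
    + assert (INR k <= INR n * d).
      { apply (Rmult_le_compat_r (INR n)) in H; [|lra]. unfold Rdiv in H.
        rewrite Rmult_assoc, Rinv_l in H by lra. lra. }
      assert (c <= INR n * p - INR k) by (unfold c; nra).
      assert (c^2 <= (INR k + - (INR n * p))^2) by nra.
      apply (Rmult_le_reg_l (c^2)); [nra|]. rewrite <- Rmult_assoc, Rinv_r by nra. lra.
    + apply Rmult_le_pos; [apply Rlt_le, Rinv_0_lt_compat; nra | apply pow2_ge_0].
  - rewrite Bm_scal, Bm_mom2. replace (INR n * p + - (INR n * p)) with 0 by ring.
    unfold c. apply Rle_trans with (/ (INR n * (p - d))^2 * (INR n * (1/4))).
    + apply Rmult_le_compat_l; [apply Rlt_le, Rinv_0_lt_compat, pow_lt, Rmult_lt_0_compat; lra|].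
      assert (0 <= INR n * (p - 1/2)^2) by (apply Rmult_le_pos; [lra| apply pow2_ge_0]). nra.
    + right. field. split; lra.
Qed.

Lemma cheb_lo n p d : (0 < n)%nat -> 0 <= p <= 1 -> p < d ->
  1 - Bm n p (gf n d) <= / (4 * INR n * (d - p)^2).
Proof.
  intros Hn Hp Hd. assert (HN : 0 < INR n) by (apply lt_0_INR; lia).
  set (c := INR n * (d - p)). assert (Hc : 0 < c) by (unfold c; nra).
  replace (1 - Bm n p (gf n d)) with (Bm n p (fun k => 1 * 1 + (-1) * gf n d k))
    by (rewrite Bm_lin, Bm_const; ring).
  apply Rle_trans with (Bm n p (fun k => / c^2 * (INR k + - (INR n * p))^2)).
  - apply Bm_mono; auto. intro k. unfold gf. destruct Rle_dec as [H|H].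
    + replace (1 * 1 + -1 * 1) with 0 by ring.
      apply Rmult_le_pos; [apply Rlt_le, Rinv_0_lt_compat; nra | apply pow2_ge_0].
    + assert (INR n * d < INR k).
      { apply Rnot_le_lt in H. apply (Rmult_lt_compat_r (INR n)) in H; [|lra]. unfold Rdiv in H.
        rewrite Rmult_assoc, Rinv_l in H by lra. lra. }
      assert (c <= INR k - INR n * p) by (unfold c; nra).
      assert (c^2 <= (INR k + - (INR n * p))^2) by nra.
      replace (1 * 1 + -1 * 0) with 1 by ring.
      apply (Rmult_le_reg_l (c^2)); [nra|]. rewrite <- Rmult_assoc, Rinv_r by nra. lra.
  - rewrite Bm_scal, Bm_mom2. replace (INR n * p + - (INR n * p)) with 0 by ring.
    unfold c. apply Rle_trans with (/ (INR n * (d - p))^2 * (INR n * (1/4))).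
    + apply Rmult_le_compat_l; [apply Rlt_le, Rinv_0_lt_compat, pow_lt, Rmult_lt_0_compat; lra|].
      assert (0 <= INR n * (p - 1/2)^2) by (apply Rmult_le_pos; [lra| apply pow2_ge_0]). nra.
    + right. field. split; lra.
Qed.

Definition dB (m : nat) (p : R) (g : nat -> R) : R :=
  INR m * (Bm (pred m) p (fun k => g (S k)) - Bm (pred m) p g).

Lemma Bm_derive_R m : forall g p, derivable_pt_lim (fun q => Bm m q g) p (dB m p g).
Proof.
  induction m; intros g p.
  - unfold dB; simpl. replace (0 * (g 1%nat - g 0%nat)) with 0 by ring. apply derivable_pt_lim_const.
  - cbn [Bm].
    assert (H : derivable_pt_lim (fun q => q * Bm m q (fun k => g (S k)) + (1 - q) * Bm m q g) p
      ((1 * Bm m p (fun k => g (S k)) + p * dB m p (fun k => g (S k))) +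
       ((0 - 1) * Bm m p g + (1 - p) * dB m p g))).
    { apply (derivable_pt_lim_plus (fun q => q * Bm m q (fun k => g (S k))) (fun q => (1 - q) * Bm m q g)).
      - apply (derivable_pt_lim_mult id (fun q => Bm m q (fun k => g (S k)))); auto.
        apply derivable_pt_lim_id.
      - apply (derivable_pt_lim_mult (fun q => 1 - q) (fun q => Bm m q g)); auto.
        apply (derivable_pt_lim_minus (fun _ => 1) id). apply derivable_pt_lim_const. apply derivable_pt_lim_id. }
    replace (dB (S m) p g) with ((1 * Bm m p (fun k => g (S k)) + p * dB m p (fun k => g (S k))) +
       ((0 - 1) * Bm m p g + (1 - p) * dB m p g)); auto.
    unfold dB. destruct m as [|k].
    + simpl. ring.
    + cbn [pred Bm]. rewrite !S_INR. ring.
Qed.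

Lemma Bm_derive m g p : is_derive (fun q => Bm m q g) p (dB m p g).
Proof. apply is_derive_Reals, Bm_derive_R. Qed.

Lemma cont_snd (F : R -> R -> R) x y : continuity_2d_pt F x y -> continuous (fun t => F x t) y.
Proof.
  intro H. apply continuity_2d_pt_filterlim in H.
  apply (continuous_comp_2 (fun _ => x) (fun t => t) F y).
  apply continuous_const. apply continuous_id. exact H.
Qed.

Lemma cont_fst (F : R -> R -> R) x y : continuity_2d_pt F x y -> continuous (fun t => F t y) x.
Proof.
  intro H. apply continuity_2d_pt_filterlim in H.
  apply (continuous_comp_2 (fun t => t) (fun _ => y) F x).
  apply continuous_id. apply continuous_const. exact H.
Qed.

Lemma param_deriv (F : R -> R -> R) :
  (forall x y, continuity_2d_pt F x y) ->
  (forall x y, ex_derive (fun t => F t y) x) ->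
  (forall x y, continuity_2d_pt (pd true F) x y) ->
  forall x, is_derive (fun x => RInt (fun s => F x s) 0 1) x (RInt (fun s => pd true F x s) 0 1).
Proof.
  intros Hc Hd Hc1 x.
  apply (is_derive_RInt_param F 0 1 x).
  - apply filter_forall. intros; apply Hd.
  - intros t _. apply Hc1.
  - apply filter_forall. intros z. apply (ex_RInt_continuous (V:=R_CompleteNormedModule)). intros; apply cont_snd, Hc.
Qed.

Lemma bounded2d (F : R -> R -> R) :
  (forall x y, 0 <= x <= 1 -> 0 <= y <= 1 -> continuity_2d_pt F x y) ->
  exists M, 0 <= M /\ forall x y, 0 <= x <= 1 -> 0 <= y <= 1 -> Rabs (F x y) <= M.
Proof.
  intros H.
  destruct (uniform_continuity_2d F 0 1 0 1 H (mkposreal 1 Rlt_0_1)) as [delta Hd].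
  destruct (INR_unbounded (/ delta)) as [N HN].
  assert (Hdp : 0 < delta) by apply cond_pos.
  assert (HN0 : 0 < INR N) by (apply Rlt_trans with (/ delta); auto; apply Rinv_0_lt_compat; auto).
  exists (Rabs (F 0 0) + INR N). split. pose proof (Rabs_pos (F 0 0)); lra.
  intros x y Hx Hy.
  assert (Hinv : / INR N < delta).
  { rewrite <- (Rinv_inv delta). apply Rinv_lt_contravar; auto. apply Rmult_lt_0_compat; auto. apply Rinv_0_lt_compat; auto. }
  assert (Hk : forall k, (k <= N)%nat ->
     Rabs (F (INR k * x / INR N) (INR k * y / INR N) - F 0 0) <= INR k).
  { induction k; intros Hk.
    - simpl. replace (0 * x / INR N) with 0 by (field; lra). replace (0 * y / INR N) with 0 by (field; lra).
      rewrite Rminus_diag, Rabs_R0. lra.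
    - assert (HkN : INR (S k) <= INR N) by (apply le_INR; auto).
      assert (Hk0 : 0 <= INR k) by apply pos_INR.
      rewrite S_INR in *.
      assert (Hxy : forall z, 0 <= z <= 1 -> 0 <= INR k * z / INR N <= 1 /\ 0 <= (INR k + 1) * z / INR N <= 1
                  /\ Rabs ((INR k + 1) * z / INR N - INR k * z / INR N) < delta).
      { intros z Hz. repeat split.
        - apply Rmult_le_pos; [nra|]. apply Rlt_le, Rinv_0_lt_compat; auto.
        - apply Rmult_le_reg_r with (INR N); auto. unfold Rdiv. rewrite Rmult_assoc, Rinv_l by lra. nra.
        - apply Rmult_le_pos; [nra|]. apply Rlt_le, Rinv_0_lt_compat; auto.
        - apply Rmult_le_reg_r with (INR N); auto. unfold Rdiv. rewrite Rmult_assoc, Rinv_l by lra. nra.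
        - replace ((INR k + 1) * z / INR N - INR k * z / INR N) with (z * / INR N) by (field; lra).
          rewrite Rabs_right. apply Rle_lt_trans with (/ INR N); auto.
          rewrite <- (Rmult_1_l (/ INR N)) at 2. apply Rmult_le_compat_r; [apply Rlt_le, Rinv_0_lt_compat|]; lra.
          apply Rle_ge, Rmult_le_pos; [lra|apply Rlt_le, Rinv_0_lt_compat; auto]. }
      destruct (Hxy x Hx) as [Hx1 [Hx2 Hx3]]. destruct (Hxy y Hy) as [Hy1 [Hy2 Hy3]].
      pose proof (Hd _ _ _ _ Hx1 Hy1 Hx2 Hy2 Hx3 Hy3). simpl in H0.
      pose proof (IHk ltac:(lia)).
      replace (F ((INR k + 1) * x / INR N) ((INR k + 1) * y / INR N) - F 0 0) with
        ((F ((INR k + 1) * x / INR N) ((INR k + 1) * y / INR N) - F (INR k * x / INR N) (INR k * y / INR N))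
         + (F (INR k * x / INR N) (INR k * y / INR N) - F 0 0)) by ring.
      eapply Rle_trans; [apply Rabs_triang|]. lra. }
  specialize (Hk N (le_n N)).
  replace (INR N * x / INR N) with x in Hk by (field; lra).
  replace (INR N * y / INR N) with y in Hk by (field; lra).
  pose proof (Rabs_triang_inv (F x y) (F 0 0)). lra.
Qed.

Lemma RInt_abs_le f g a b : a <= b -> ex_RInt f a b -> ex_RInt g a b ->
  (forall t, a < t < b -> Rabs (f t) <= g t) -> Rabs (RInt f a b) <= RInt g a b.
Proof.
  intros Hab Hf Hg H. apply Rabs_le. split.
  - assert (E : RInt (fun t => - g t) a b = - RInt g a b).
    { apply (RInt_opp (V:=R_CompleteNormedModule) g a b Hg). }
    rewrite <- E. apply RInt_le; auto.
    apply (ex_RInt_opp (V:=R_NormedModule) g a b Hg).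
    intros t Ht. specialize (H t Ht). apply Rabs_le_between in H. lra.
  - apply RInt_le; auto. intros t Ht. specialize (H t Ht). apply Rabs_le_between in H. lra.
Qed.

Lemma minbound s b x : 0 <= s -> 0 < b -> x <= 1 -> (0 < s -> x <= b^2 / s^2) -> x <= 4 * b^2 / (s + b)^2.
Proof.
  intros Hs Hb Hx H.
  assert (Hsb : 0 < (s + b)^2) by (apply pow_lt; lra).
  destruct (Rlt_or_le s b) as [Hl|Hl].
  - apply Rle_trans with 1; auto. apply Rmult_le_reg_r with ((s+b)^2); auto.
    unfold Rdiv. rewrite Rmult_assoc, Rinv_l by lra. nra.
  - assert (0 < s) by lra. specialize (H H0). eapply Rle_trans; [exact H|].
    assert (Hs2 : 0 < s^2) by (apply pow_lt; lra).
    apply Rmult_le_reg_r with ((s+b)^2); auto. unfold Rdiv.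
    rewrite (Rmult_assoc (4 * b^2)), Rinv_l by lra.
    apply Rmult_le_reg_r with (s^2); auto.
    replace (b ^ 2 * / s ^ 2 * (s + b) ^ 2 * s ^ 2) with (b^2 * (s+b)^2) by (field; lra).
    assert ((s+b)^2 <= 4*s^2) by nra. assert (0 <= b^2) by apply pow2_ge_0. nra.
Qed.

Lemma lim_sqrt (u : nat -> R) L C : 0 <= C ->
  (forall n, (1 <= n)%nat -> Rabs (u n - L) <= C / sqrt (INR n)) -> is_lim_seq u L.
Proof.
  intros HC H. apply is_lim_seq_spec. intros eps.
  assert (He : 0 < eps) by apply cond_pos.
  destruct (INR_unbounded ((C / eps)^2)) as [N HN].
  exists (S N). intros n Hn.
  assert (HnN : INR N < INR n) by (apply lt_INR; lia).
  assert (Hn1 : (1 <= n)%nat) by lia.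
  assert (Hnp : 0 < INR n) by (apply lt_0_INR; lia).
  eapply Rle_lt_trans; [apply H; auto|].
  set (s := sqrt (INR n)). assert (Hs : s * s = INR n) by (apply sqrt_sqrt; lra).
  assert (Hs0 : 0 < s) by (apply sqrt_lt_R0; auto).
  assert (C / eps < s).
  { destruct (Rlt_or_le (C/eps) s); auto.
    assert (0 <= C / eps) by (apply Rmult_le_pos; [auto|apply Rlt_le, Rinv_0_lt_compat; auto]).
    assert (s * s <= (C/eps)^2) by nra. lra. }
  apply Rmult_lt_reg_r with s; auto. unfold Rdiv at 1. rewrite Rmult_assoc, Rinv_l by lra.
  apply Rmult_lt_reg_r with (/ eps). apply Rinv_0_lt_compat; auto.
  replace (eps * s * / eps) with s by (field; lra). lra.
Qed.

Lemma rpower_bound n : (1 <= n)%nat -> / sqrt (INR n) <= Rpower (INR n) (- (1/4)).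
Proof.
  intros Hn. assert (Hnp : 0 < INR n) by (apply lt_0_INR; lia).
  assert (Hn1 : 1 <= INR n) by (apply (le_INR 1); auto).
  rewrite <- Rpower_sqrt by auto. rewrite <- Rpower_Ropp.
  unfold Rpower.
  assert (0 <= ln (INR n)) by (rewrite <- ln_1; apply ln_le; lra).
  destruct (Req_dec (ln (INR n)) 0) as [E|E].
  - rewrite E. right. f_equal. ring.
  - left. apply exp_increasing. replace (/2) with (1/2) by field. nra.
Qed.

Section Setup.
Variable W : R -> R -> R.
Hypothesis HW : graphon W.
Hypothesis Hreg : regularity_condition W.

Definition W1 := pd true W.
Definition W2 := pd true W1.
Definition W3 := pd true W2.
Definition D1 x := RInt (fun s => W1 x s) 0 1.
Definition D2 x := RInt (fun s => W2 x s) 0 1.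
Definition D3 x := RInt (fun s => W3 x s) 0 1.

Lemma C3_cont s : (length s <= 3)%nat -> forall x y, continuity_2d_pt (iter_pd s W) x y.
Proof. intros Hs x y. destruct Hreg as [HC _]. destruct (HC s Hs) as [Hc _].
  apply continuity_2d_pt_filterlim. apply Hc. Qed.

Lemma C3_der s : (length s < 3)%nat -> forall x y, ex_derive (fun t => iter_pd s W t y) x.
Proof. intros Hs x y. destruct Hreg as [HC _]. destruct (HC s ltac:(lia)) as [_ Hd].
  exact (proj1 (Hd Hs x y)). Qed.

Lemma cW0 x y : continuity_2d_pt W x y. Proof. apply (C3_cont nil); simpl; lia. Qed.
Lemma cW1 x y : continuity_2d_pt W1 x y. Proof. apply (C3_cont (true::nil)); simpl; lia. Qed.
Lemma cW2 x y : continuity_2d_pt W2 x y. Proof. apply (C3_cont (true::true::nil)); simpl; lia. Qed.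
Lemma cW3 x y : continuity_2d_pt W3 x y. Proof. apply (C3_cont (true::true::true::nil)); simpl; lia. Qed.
Lemma dW0 x y : ex_derive (fun t => W t y) x. Proof. apply (C3_der nil); simpl; lia. Qed.
Lemma dW1 x y : ex_derive (fun t => W1 t y) x. Proof. apply (C3_der (true::nil)); simpl; lia. Qed.
Lemma dW2 x y : ex_derive (fun t => W2 t y) x. Proof. apply (C3_der (true::true::nil)); simpl; lia. Qed.

Lemma D_der x : is_derive (Dfun W) x (D1 x).
Proof. unfold Dfun. apply (param_deriv W cW0 dW0 cW1 x). Qed.
Lemma D1_der x : is_derive D1 x (D2 x).
Proof. unfold D1. apply (param_deriv W1 cW1 dW1 cW2 x). Qed.
Lemma D2_der x : is_derive D2 x (D3 x).
Proof. unfold D2. apply (param_deriv W2 cW2 dW2 cW3 x). Qed.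

Lemma exd_cont (f : R -> R) x : ex_derive f x -> continuous f x.
Proof. intro H. apply (ex_derive_continuous (K:=R_AbsRing) (V:=R_NormedModule) f x H). Qed.

Lemma D_cont x : continuous (Dfun W) x.
Proof. apply exd_cont. eexists; apply D_der. Qed.
Lemma D1_cont x : continuous D1 x.
Proof. apply exd_cont. eexists; apply D1_der. Qed.
Lemma D2_cont x : continuous D2 x.
Proof. apply exd_cont. eexists; apply D2_der. Qed.

Lemma W_exRInt a : ex_RInt (fun t => W a t) 0 1.
Proof. apply (ex_RInt_continuous (V:=R_CompleteNormedModule)). intros; apply cont_snd, cW0. Qed.

Lemma W_range t u : 0 <= t <= 1 -> 0 <= u <= 1 -> 0 <= W t u <= 1.
Proof. destruct HW as [_ H]. apply H. Qed.

Lemma D_range t : 0 <= t <= 1 -> 0 <= Dfun W t <= 1.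
Proof.
  intros Ht. unfold Dfun. split.
  - apply Rle_trans with (RInt (fun _ => 0) 0 1).
    + rewrite RInt_const. unfold scal; simpl; unfold mult; simpl. lra.
    + apply RInt_le; [lra| apply ex_RInt_const | apply W_exRInt|]. intros; apply W_range; lra.
  - apply Rle_trans with (RInt (fun _ => 1) 0 1).
    + apply RInt_le; [lra| apply W_exRInt | apply ex_RInt_const|]. intros; apply W_range; lra.
    + rewrite RInt_const. unfold scal; simpl; unfold mult; simpl. lra.
Qed.

Lemma cont_pt_of (f : R -> R) x : continuous f x -> continuity_pt f x.
Proof. intro H. apply continuity_pt_filterlim. exact H. Qed.

Lemma bounds : exists m K1 K2, 0 < m /\ 0 <= K1 /\ 0 <= K2 /\
  (forall t, 0 <= t <= 1 -> m <= D1 t) /\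
  (forall t u, 0 <= t <= 1 -> 0 <= u <= 1 -> Rabs (W1 t u) <= K1) /\
  (forall t, 0 <= t <= 1 -> Rabs (D1 t) <= K1) /\
  (forall t, 0 <= t <= 1 -> Rabs (D2 t) <= K2).
Proof.
  destruct (continuity_ab_min D1 0 1 ltac:(lra)) as [mx [Hmx Hmx01]].
  { intros; apply cont_pt_of, D1_cont. }
  destruct (bounded2d W1) as [K1 [HK1 HK1b]]. { intros; apply cW1. }
  destruct (bounded2d W2) as [K2 [HK2 HK2b]]. { intros; apply cW2. }
  exists (D1 mx), K1, K2. repeat split; auto.
  - destruct Hreg as [_ [Hpos _]]. rewrite <- (is_derive_unique _ _ _ (D_der mx)). apply Hpos; auto.
  - intros t Ht. unfold D1. replace K1 with ((1 - 0) * K1) by ring.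
    apply abs_RInt_le_const; [lra| |]. apply (ex_RInt_continuous (V:=R_CompleteNormedModule)); intros; apply cont_snd, cW1.
    intros; apply HK1b; lra.
  - intros t Ht. unfold D2. replace K2 with ((1 - 0) * K2) by ring.
    apply abs_RInt_le_const; [lra| |]. apply (ex_RInt_continuous (V:=R_CompleteNormedModule)); intros; apply cont_snd, cW2.
    intros; apply HK2b; lra.
Qed.

Lemma D_incr m : (forall t, 0 <= t <= 1 -> m <= D1 t) ->
  forall s t, 0 <= s -> s <= t -> t <= 1 -> m * (t - s) <= Dfun W t - Dfun W s.
Proof.
  intros Hm s t Hs Hst Ht.
  destruct (MVT_gen (Dfun W) s t D1) as [c [Hc E]].
  - intros; apply D_der.
  - intros; apply cont_pt_of, D_cont.
  - rewrite E. rewrite Rmin_left, Rmax_right in Hc by lra.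
    apply Rmult_le_compat_r; [lra|]. apply Hm; lra.
Qed.
End Setup.

Lemma cR_mult (f g : R -> R) x : continuous f x -> continuous g x -> continuous (fun t => f t * g t) x.
Proof. intros Hf Hg. apply (continuous_mult (K:=R_AbsRing) f g x Hf Hg). Qed.
Lemma cR_plus (f g : R -> R) x : continuous f x -> continuous g x -> continuous (fun t => f t + g t) x.
Proof. intros Hf Hg. apply (continuous_plus (V:=R_NormedModule) f g x Hf Hg). Qed.
Lemma cR_minus (f g : R -> R) x : continuous f x -> continuous g x -> continuous (fun t => f t - g t) x.
Proof. intros Hf Hg. apply (continuous_minus (V:=R_NormedModule) f g x Hf Hg). Qed.
Lemma cR_const (c : R) x : continuous (fun _ : R => c) x.
Proof. apply (continuous_const (U:=R_UniformSpace) (V:=R_UniformSpace)). Qed.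
Lemma cR_inv (f : R -> R) x : continuous f x -> f x <> 0 -> continuous (fun t => / f t) x.
Proof. intros; apply continuous_Rinv_comp; auto. Qed.
Lemma exRInt_cont (f : R -> R) a b : a <= b -> (forall t, a <= t <= b -> continuous f t) -> ex_RInt f a b.
Proof. intros Hab H. apply (ex_RInt_continuous (V:=R_CompleteNormedModule)).
  rewrite Rmin_left, Rmax_right by lra. auto. Qed.
Lemma is_derive_R (f : R -> R) (x l l' : R) : is_derive f x l -> l = l' -> is_derive f x l'.
Proof. intros H E; subst; auto. Qed.

Lemma Bm_comp_der n g (f : R -> R) x df : is_derive f x df ->
  is_derive (fun t => Bm n (f t) g) x (df * dB n (f x) g).
Proof. intros H. apply (is_derive_comp (fun p => Bm n p g) f x). apply Bm_derive. exact H. Qed.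

Lemma dB_comp_cont n g (f : R -> R) x : ex_derive f x -> continuous (fun t => dB n (f t) g) x.
Proof. intros [df H]. apply exd_cont. unfold dB.
  eexists. apply (is_derive_comp (fun p => INR n * (Bm (pred n) p (fun k => g (S k)) - Bm (pred n) p g)) f x); [|exact H].
  apply is_derive_Reals. apply derivable_pt_lim_scal.
  apply derivable_pt_lim_minus; apply Bm_derive_R. Qed.

Section Main.
Variable W : R -> R -> R.
Hypothesis HW : graphon W.
Hypothesis Hreg : regularity_condition W.
Variable y : R.
Hypothesis Hy : 0 < y < 1.
Variable m : R.
Hypothesis Hm : 0 < m.
Hypothesis Hm1 : forall t, 0 <= t <= 1 -> m <= D1 W t.

Definition psi n t := Bm n (Dfun W t) (gf n (Dfun W y)).
Definition bb n := / (2 * m * sqrt (INR n)).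

Lemma psi_der n t : is_derive (psi n) t (D1 W t * dB n (Dfun W t) (gf n (Dfun W y))).
Proof. unfold psi. apply Bm_comp_der. apply D_der; auto. Qed.

Lemma psi_cont n t : continuous (psi n) t.
Proof. apply exd_cont. eexists. apply psi_der. Qed.

Lemma psi_range n t : 0 <= t <= 1 -> 0 <= psi n t <= 1.
Proof. intros. apply Bm_range. apply (D_range W); auto. apply gf_range. Qed.

Lemma bb_pos n : (1 <= n)%nat -> 0 < bb n.
Proof. intros. unfold bb. apply Rinv_0_lt_compat. apply Rmult_lt_0_compat; [lra|].
  apply sqrt_lt_R0. apply lt_0_INR; lia. Qed.

Lemma bb_sq n : (1 <= n)%nat -> bb n ^ 2 = / (4 * m^2 * INR n).
Proof. intros. unfold bb. assert (0 < INR n) by (apply lt_0_INR; lia).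
  assert (sqrt (INR n) * sqrt (INR n) = INR n) by (apply sqrt_sqrt; lra).
  assert (0 < sqrt (INR n)) by (apply sqrt_lt_R0; lra).
  set (s := sqrt (INR n)) in *. rewrite <- H1. field. split; lra. Qed.

Lemma bb_le n : (1 <= n)%nat -> bb n <= / (2 * m).
Proof. intros. unfold bb. apply Rinv_le_contravar. lra.
  assert (1 <= sqrt (INR n)). { rewrite <- sqrt_1. apply sqrt_le_1_alt. apply (le_INR 1); auto. }
  nra. Qed.

Lemma cheb_bound n s p : (1 <= n)%nat -> 0 < s -> m * s <= p ->
  / (4 * INR n * p^2) <= bb n ^ 2 / s^2.
Proof. intros Hn Hs Hp. rewrite bb_sq by auto. assert (0 < INR n) by (apply lt_0_INR; lia).
  replace (/ (4 * m ^ 2 * INR n) / s ^ 2) with (/ (4 * INR n * (m * s)^2)) by (field; split; lra).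
  apply Rinv_le_contravar. apply Rmult_lt_0_compat; [lra|]. apply pow_lt; nra.
  apply Rmult_le_compat_l; [lra|]. assert (0 < m * s) by nra. nra. Qed.

Lemma pb_lo n t : (1 <= n)%nat -> 0 <= t <= y -> 0 <= 1 - psi n t <= 4 * bb n ^ 2 / (y - t + bb n)^2.
Proof.
  intros Hn Ht. pose proof (psi_range n t ltac:(lra)). split; [lra|].
  apply minbound; [lra| apply bb_pos; auto | lra |]. intros Hs.
  pose proof (D_incr W Hreg m Hm1 t y ltac:(lra) ltac:(lra) ltac:(lra)).
  assert (0 < m * (y - t)) by (apply Rmult_lt_0_compat; lra).
  eapply Rle_trans; [apply cheb_lo; [lia| apply (D_range W); try assumption; lra | lra] |].
  apply cheb_bound; auto.
Qed.

Lemma pb_hi n t : (1 <= n)%nat -> y <= t <= 1 -> 0 <= psi n t <= 4 * bb n ^ 2 / (t - y + bb n)^2.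
Proof.
  intros Hn Ht. pose proof (psi_range n t ltac:(lra)). split; [lra|].
  apply minbound; [lra| apply bb_pos; auto | lra |]. intros Hs.
  pose proof (D_incr W Hreg m Hm1 y t ltac:(lra) ltac:(lra) ltac:(lra)).
  assert (0 < m * (t - y)) by (apply Rmult_lt_0_compat; lra).
  eapply Rle_trans; [apply cheb_hi; [lia| apply (D_range W); try assumption; lra | lra] |].
  apply cheb_bound; auto.
Qed.

Lemma maj_lo n M : (1 <= n)%nat -> 0 <= M ->
  RInt (fun t => M * (4 * bb n ^ 2 / (y - t + bb n)^2)) 0 y <= 4 * M * bb n.
Proof.
  intros Hn HM. pose proof (bb_pos n Hn) as Hb. set (b := bb n) in *.
  rewrite (is_RInt_unique _ 0 y (M * (4 * b^2) / (y - y + b) - M * (4 * b^2) / (y - 0 + b))).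
  - replace (y - y + b) with b by ring. replace (y - 0 + b) with (y + b) by ring.
    assert (0 <= M * (4 * b^2) / (y + b)). { apply Rmult_le_pos; [|apply Rlt_le, Rinv_0_lt_compat; lra]. nra. }
    replace (M * (4 * b ^ 2) / b) with (4 * M * b) in * by (field; lra). lra.
  - apply (is_RInt_derive (V:=R_CompleteNormedModule) (fun t => M * (4 * b^2) / (y - t + b))).
    + intros t Ht. rewrite Rmin_left, Rmax_right in Ht by lra.
      auto_derive. lra. field. lra.
    + intros t Ht. rewrite Rmin_left, Rmax_right in Ht by lra.
      apply exd_cont. auto_derive. apply Rmult_integral_contrapositive; split; [lra|]. rewrite Rmult_1_r; lra.
Qed.

Lemma maj_hi n M : (1 <= n)%nat -> 0 <= M ->
  RInt (fun t => M * (4 * bb n ^ 2 / (t - y + bb n)^2)) y 1 <= 4 * M * bb n.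
Proof.
  intros Hn HM. pose proof (bb_pos n Hn) as Hb. set (b := bb n) in *.
  rewrite (is_RInt_unique _ y 1 (- (M * (4 * b^2) / (1 - y + b)) - - (M * (4 * b^2) / (y - y + b)))).
  - replace (y - y + b) with b by ring.
    assert (0 <= M * (4 * b^2) / (1 - y + b)). { apply Rmult_le_pos; [|apply Rlt_le, Rinv_0_lt_compat; lra]. nra. }
    replace (M * (4 * b ^ 2) / b) with (4 * M * b) in * by (field; lra). lra.
  - apply (is_RInt_derive (V:=R_CompleteNormedModule) (fun t => - (M * (4 * b^2) / (t - y + b)))).
    + intros t Ht. rewrite Rmin_left, Rmax_right in Ht by lra.
      auto_derive. lra. field. lra.
    + intros t Ht. rewrite Rmin_left, Rmax_right in Ht by lra.
      apply exd_cont. auto_derive. apply Rmult_integral_contrapositive; split; [lra|]. rewrite Rmult_1_r; lra.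
Qed.

Lemma tail n (k : R -> R) M : (1 <= n)%nat -> 0 <= M ->
  (forall t, 0 <= t <= 1 -> continuous k t) -> (forall t, 0 <= t <= 1 -> Rabs (k t) <= M) ->
  Rabs (RInt (fun t => k t * (psi n t - 1)) 0 y) + Rabs (RInt (fun t => k t * psi n t) y 1) <= 8 * M * bb n.
Proof.
  intros Hn HM Hkc Hkb. pose proof (bb_pos n Hn) as Hb.
  assert (A : Rabs (RInt (fun t => k t * (psi n t - 1)) 0 y) <= 4 * M * bb n).
  { eapply Rle_trans; [|apply (maj_lo n M); auto].
    apply RInt_abs_le; [lra| | |].
    - apply exRInt_cont; [lra|]. intros. apply cR_mult. apply Hkc; lra.
      apply cR_minus. apply psi_cont. apply cR_const.
    - apply exRInt_cont; [lra|]. intros. apply exd_cont. auto_derive. apply Rmult_integral_contrapositive; split; [lra|]. rewrite Rmult_1_r; lra.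
    - intros t Ht. rewrite Rabs_mult. pose proof (pb_lo n t Hn ltac:(lra)).
      rewrite (Rabs_left1 (psi n t - 1)) by lra. apply Rmult_le_compat; try lra. apply Rabs_pos. apply Hkb; lra. }
  assert (B : Rabs (RInt (fun t => k t * psi n t) y 1) <= 4 * M * bb n).
  { eapply Rle_trans; [|apply (maj_hi n M); auto].
    apply RInt_abs_le; [lra| | |].
    - apply exRInt_cont; [lra|]. intros. apply cR_mult. apply Hkc; lra. apply psi_cont.
    - apply exRInt_cont; [lra|]. intros. apply exd_cont. auto_derive. apply Rmult_integral_contrapositive; split; [lra|]. rewrite Rmult_1_r; lra.
    - intros t Ht. rewrite Rabs_mult. pose proof (pb_hi n t Hn ltac:(lra)).
      rewrite (Rabs_right (psi n t)) by lra. apply Rmult_le_compat; try lra. apply Rabs_pos. apply Hkb; lra. }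
  lra.
Qed.
End Main.

Lemma RInt_ext_R (f g : R -> R) (a b : R) : (forall x, Rmin a b < x < Rmax a b -> f x = g x) -> RInt f a b = RInt g a b.
Proof. apply RInt_ext. Qed.

Section Part1.
Variable W : R -> R -> R.
Hypothesis HW : graphon W.
Hypothesis Hreg : regularity_condition W.
Variable y : R.
Hypothesis Hy : 0 < y < 1.
Variable m : R.
Hypothesis Hm : 0 < m.
Hypothesis Hm1 : forall t, 0 <= t <= 1 -> m <= D1 W t.
Variable u : R.
Hypothesis Hu : 0 <= u <= 1.

Definition hh t := (W t u - Dfun W t) / D1 W t.
Definition hd t := ((W1 W t u - D1 W t) * D1 W t - (W t u - Dfun W t) * D2 W t) / (D1 W t * D1 W t).

Lemma D1_nz t : 0 <= t <= 1 -> D1 W t <> 0.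
Proof. intros Ht. specialize (Hm1 t Ht). lra. Qed.

Lemma Wu_der t : is_derive (fun t => W t u) t (W1 W t u).
Proof. apply (Derive_correct (fun t => W t u)). apply dW0; auto. Qed.

Lemma num_der t : is_derive (fun t => W t u - Dfun W t) t (W1 W t u - D1 W t).
Proof. apply (is_derive_minus (fun t => W t u) (Dfun W)). apply Wu_der. apply D_der; auto. Qed.

Lemma hh_der t : 0 <= t <= 1 -> is_derive hh t (hd t).
Proof. intros Ht. unfold hh. eapply is_derive_R.
  - apply (is_derive_div (fun t => W t u - Dfun W t) (D1 W)); [apply num_der | apply D1_der; auto | apply D1_nz; auto].
  - unfold hd. field. apply D1_nz; auto. Qed.

Lemma hh_cont t : 0 <= t <= 1 -> continuous hh t.
Proof. intros. apply exd_cont. eexists. apply hh_der; auto. Qed.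

Lemma hd_cont t : 0 <= t <= 1 -> continuous hd t.
Proof. intros Ht. unfold hd, Rdiv. apply cR_mult.
  - apply cR_minus; apply cR_mult.
    + apply cR_minus. apply (cont_fst (W1 W)). apply cW1; auto. apply D1_cont; auto.
    + apply D1_cont; auto.
    + apply cR_minus. apply (cont_fst W). apply cW0; auto. apply D_cont; auto.
    + apply D2_cont; auto.
  - apply cR_inv. apply cR_mult; apply D1_cont; auto.
    apply Rmult_integral_contrapositive; split; apply D1_nz; auto.
Qed.

Variable n : nat.
Hypothesis Hn : (1 <= n)%nat.
Let g := gf n (Dfun W y).

Lemma Fp_der t : 0 <= t <= 1 -> is_derive (fun t => hh t * psi W y n t) t
   (hd t * psi W y n t + hh t * (D1 W t * dB n (Dfun W t) g)).
Proof. intros Ht. apply (is_derive_mult hh (psi W y n)). apply hh_der; auto.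
  apply psi_der; auto. intros; apply Rmult_comm. Qed.

Lemma Fp_dcont t : 0 <= t <= 1 -> continuous (fun t => hd t * psi W y n t + hh t * (D1 W t * dB n (Dfun W t) g)) t.
Proof. intros Ht. apply cR_plus; apply cR_mult.
  apply hd_cont; auto. apply psi_cont; auto. apply hh_cont; auto.
  apply cR_mult. apply D1_cont; auto. apply dB_comp_cont. eexists; apply D_der; auto. Qed.

Lemma IBP : RInt (fun t => (W t u - Dfun W t) * dB n (Dfun W t) g) 0 1 =
  hh 1 * psi W y n 1 - hh 0 * psi W y n 0 - RInt (fun t => hd t * psi W y n t) 0 1.
Proof.
  assert (I : is_RInt (fun t => hd t * psi W y n t + hh t * (D1 W t * dB n (Dfun W t) g)) 0 1
                (hh 1 * psi W y n 1 - hh 0 * psi W y n 0)).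
  { apply (is_RInt_derive (V:=R_CompleteNormedModule) (fun t => hh t * psi W y n t)).
    - intros t Ht. rewrite Rmin_left, Rmax_right in Ht by lra. apply Fp_der; auto.
    - intros t Ht. rewrite Rmin_left, Rmax_right in Ht by lra. apply Fp_dcont; auto. }
  apply (is_RInt_unique (V:=R_CompleteNormedModule)) in I.
  rewrite (RInt_plus (V:=R_CompleteNormedModule) (fun t => hd t * psi W y n t) (fun t => hh t * (D1 W t * dB n (Dfun W t) g))) in I.
  - rewrite (RInt_ext_R (fun t => hh t * (D1 W t * dB n (Dfun W t) g)) (fun t => (W t u - Dfun W t) * dB n (Dfun W t) g)) in I.
    + unfold plus in I; simpl in I. lra.
    + intros t Ht. rewrite Rmin_left, Rmax_right in Ht by lra. unfold hh. field. apply D1_nz; lra.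
  - apply exRInt_cont; [lra|]. intros. apply cR_mult. apply hd_cont; auto. apply psi_cont; auto.
  - apply exRInt_cont; [lra|]. intros. apply cR_mult. apply hh_cont; auto.
    apply cR_mult. apply D1_cont; auto. apply dB_comp_cont. eexists; apply D_der; auto.
Qed.

Lemma hh_y : hh y = hh 0 + RInt hd 0 y.
Proof.
  assert (I : is_RInt hd 0 y (hh y - hh 0)).
  { apply (is_RInt_derive (V:=R_CompleteNormedModule) hh).
    - intros t Ht. rewrite Rmin_left, Rmax_right in Ht by lra. apply hh_der; lra.
    - intros t Ht. rewrite Rmin_left, Rmax_right in Ht by lra. apply hd_cont; lra. }
  apply (is_RInt_unique (V:=R_CompleteNormedModule)) in I. lra.
Qed.

Lemma hh_bound t : 0 <= t <= 1 -> Rabs (hh t) <= / m.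
Proof. intros Ht. unfold hh. pose proof (W_range W HW t u Ht Hu). pose proof (D_range W HW Hreg t Ht).
  pose proof (Hm1 t Ht). unfold Rdiv. rewrite Rabs_mult, Rabs_inv, (Rabs_right (D1 W t)) by lra.
  apply Rle_trans with (1 * / D1 W t).
  - apply Rmult_le_compat_r. apply Rlt_le, Rinv_0_lt_compat; lra. apply Rabs_le; lra.
  - rewrite Rmult_1_l. apply Rinv_le_contravar; lra.
Qed.

End Part1.

Lemma Bm_D_cont W (Hreg : regularity_condition W) k g t : continuous (fun t => Bm k (Dfun W t) g) t.
Proof. apply exd_cont. eexists. apply Bm_comp_der. apply D_der; auto. Qed.

Lemma Hn_eq W (Hreg : regularity_condition W) n y u : (2 <= n)%nat ->
  H_n W n y u = RInt (fun t => (W t u - Dfun W t) * dB n (Dfun W t) (gf n (Dfun W y))) 0 1.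
Proof.
  intros Hn. destruct n as [|k]; [lia|]. unfold H_n.
  rewrite (condE_X2_eq W (W_exRInt W Hreg)), (c_n_eq W (W_exRInt W Hreg)).
  set (g := gf (S k) (Dfun W y)).
  set (A := fun t => W t u * Bm k (Dfun W t) (fun j => g (S j)) + (1 - W t u) * Bm k (Dfun W t) g).
  set (B := fun t => Bm (S k) (Dfun W t) g).
  assert (cA : forall t, continuous A t).
  { intros t. unfold A. apply cR_plus; apply cR_mult.
    apply (cont_fst W). apply cW0; auto. apply Bm_D_cont; auto.
    apply (cR_minus (fun _ => 1) (fun t => W t u)). apply cR_const. 
    apply (cont_fst W). apply cW0; auto. apply Bm_D_cont; auto. }
  assert (cB : forall t, continuous B t) by (intros; unfold B; apply Bm_D_cont; auto).
  assert (eA : ex_RInt A 0 1) by (apply exRInt_cont; [lra|]; intros; auto).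
  assert (eB : ex_RInt B 0 1) by (apply exRInt_cont; [lra|]; intros; auto).
  assert (E : RInt A 0 1 - RInt B 0 1 = RInt (fun t => A t - B t) 0 1).
  { symmetry. apply (RInt_minus (V:=R_CompleteNormedModule) A B 0 1 eA eB). }
  assert (eAB : ex_RInt (fun t => A t - B t) 0 1).
  { apply exRInt_cont; [lra|]. intros. apply cR_minus; auto. }
  assert (E2 : INR (S k) * RInt (fun t => A t - B t) 0 1 = RInt (fun t => INR (S k) * (A t - B t)) 0 1).
  { symmetry. apply (RInt_scal (V:=R_CompleteNormedModule) (fun t => A t - B t) 0 1 (INR (S k)) eAB). }
  rewrite E, E2. apply RInt_ext_R. intros t _. unfold A, B, dB. cbn [pred Bm]. ring.
Qed.

Lemma hd_bound W (HW : graphon W) (Hreg : regularity_condition W) m K1 K2 :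
  0 < m -> (forall t, 0 <= t <= 1 -> m <= D1 W t) ->
  (forall t u, 0 <= t <= 1 -> 0 <= u <= 1 -> Rabs (W1 W t u) <= K1) ->
  (forall t, 0 <= t <= 1 -> Rabs (D1 W t) <= K1) ->
  (forall t, 0 <= t <= 1 -> Rabs (D2 W t) <= K2) ->
  forall u t, 0 <= u <= 1 -> 0 <= t <= 1 -> Rabs (hd W u t) <= ((K1 + K1) * K1 + 1 * K2) / (m * m).
Proof.
  intros Hm Hm1 HK1 HD1 HD2 u t Hu Ht. unfold hd.
  pose proof (Hm1 t Ht). pose proof (HK1 t u Ht Hu). pose proof (HD1 t Ht). pose proof (HD2 t Ht).
  pose proof (W_range W HW t u Ht Hu). pose proof (D_range W HW Hreg t Ht).
  assert (HN : Rabs ((W1 W t u - D1 W t) * D1 W t - (W t u - Dfun W t) * D2 W t) <= (K1 + K1) * K1 + 1 * K2).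
  { unfold Rminus at 1. eapply Rle_trans; [apply Rabs_triang|]. rewrite Rabs_Ropp, !Rabs_mult.
    apply Rplus_le_compat; apply Rmult_le_compat; try apply Rabs_pos; auto.
    - unfold Rminus. eapply Rle_trans; [apply Rabs_triang|]. rewrite Rabs_Ropp. lra.
    - apply Rabs_le; lra. }
  unfold Rdiv. rewrite Rabs_mult, Rabs_inv, (Rabs_right (D1 W t * D1 W t)) by nra.
  apply Rmult_le_compat; auto. apply Rabs_pos. apply Rlt_le, Rinv_0_lt_compat; nra.
  apply Rinv_le_contravar; nra.
Qed.

Lemma frac_bound m b s : 0 < m -> 0 < b -> b <= / (2 * m) -> 0 < s ->
  4 * b ^ 2 / (s + b) ^ 2 <= 2 / (m * m * s ^ 2) * b * m.
Proof.
  intros Hm Hb Hbm Hs.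
  assert (Hbm' : b * (2 * m) <= 1).
  { replace 1 with (/(2*m) * (2*m)) by (field; lra). apply Rmult_le_compat_r; lra. }
  assert (H4 : 4 * b^2 <= 2 * b / m).
  { apply Rmult_le_reg_r with m; auto. replace (2*b/m*m) with (2*b) by (field; lra). nra. }
  assert (Hs2 : s^2 <= (s+b)^2) by nra.
  assert (0 < s^2) by (apply pow_lt; lra).
  apply Rle_trans with (4 * b^2 / s^2).
  - unfold Rdiv. apply Rmult_le_compat_l; [nra|]. apply Rinv_le_contravar; auto.
  - replace (2 / (m * m * s ^ 2) * b * m) with (2 * b / m / s^2) by (field; lra).
    unfold Rdiv at 1 3. apply Rmult_le_compat_r; [apply Rlt_le, Rinv_0_lt_compat; auto|]. lra.
Qed.

Lemma part1 W (HW : graphon W) (Hreg : regularity_condition W) y (Hy : 0 < y < 1) m (Hm : 0 < m)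
  (Hm1 : forall t, 0 <= t <= 1 -> m <= D1 W t) Mh (HMh : 0 <= Mh)
  (Hhd : forall u t, 0 <= u <= 1 -> 0 <= t <= 1 -> Rabs (hd W u t) <= Mh) n u :
  (2 <= n)%nat -> 0 <= u <= 1 ->
  Rabs (H_n W n y u - (Dfun W y - W y u) / Derive (Dfun W) y) <=
  bb m n * (2 / (m * m * (1 - y)^2) + 2 / (m * m * y^2) + 8 * Mh).
Proof.
  intros Hn Hu. assert (Hn1 : (1 <= n)%nat) by lia.
  rewrite (Hn_eq W Hreg n y u Hn).
  rewrite (IBP W Hreg y m Hm Hm1 u n).
  rewrite (is_derive_unique _ _ _ (D_der W Hreg y)).
  assert (HT : (Dfun W y - W y u) / D1 W y = - hh W u y).
  { unfold hh. field. specialize (Hm1 y ltac:(lra)). lra. }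
  rewrite HT, (hh_y W Hreg y Hy m Hm Hm1 u).
  set (ps := psi W y n).
  assert (cps : forall t, continuous ps t) by (intros; apply psi_cont; auto).
  assert (chd : forall t, 0 <= t <= 1 -> continuous (hd W u) t) by (intros; apply (hd_cont W Hreg m Hm Hm1 u); auto).
  assert (E1 : RInt (fun t => hd W u t * ps t) 0 1 =
               RInt (fun t => hd W u t * ps t) 0 y + RInt (fun t => hd W u t * ps t) y 1).
  { symmetry. apply (RInt_Chasles (V:=R_CompleteNormedModule)).
    - apply exRInt_cont; [lra|]. intros. apply cR_mult; auto. apply chd; lra.
    - apply exRInt_cont; [lra|]. intros. apply cR_mult; auto. apply chd; lra. }
  assert (E2 : RInt (fun t => hd W u t * (ps t - 1)) 0 y =
               RInt (fun t => hd W u t * ps t) 0 y - RInt (hd W u) 0 y).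
  { rewrite (RInt_ext_R (fun t => hd W u t * (ps t - 1)) (fun t => hd W u t * ps t - hd W u t)) by (intros; ring).
    apply (RInt_minus (V:=R_CompleteNormedModule)).
    - apply exRInt_cont; [lra|]. intros. apply cR_mult; auto. apply chd; lra.
    - apply exRInt_cont; [lra|]. intros. apply chd; lra. }
  rewrite E1.
  set (J := RInt (fun t => hd W u t * (ps t - 1)) 0 y) in *.
  set (J2 := RInt (fun t => hd W u t * ps t) y 1).
  set (J1 := RInt (fun t => hd W u t * ps t) 0 y) in *.
  set (Ih := RInt (hd W u) 0 y) in *.
  replace (hh W u 1 * ps 1 - hh W u 0 * ps 0 - (J1 + J2) - - (hh W u 0 + Ih))
    with (hh W u 1 * ps 1 + hh W u 0 * (1 - ps 0) - J - J2) by (rewrite E2; ring).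
  pose proof (tail W HW Hreg y Hy m Hm Hm1 n (hd W u) Mh Hn1 HMh chd (fun t Ht => Hhd u t Hu Ht)) as Htail.
  fold ps in Htail. fold J J2 in Htail.
  pose proof (bb_pos m Hm n Hn1) as Hb. pose proof (bb_le m Hm n Hn1) as Hbl.
  set (b := bb m n) in *.
  pose proof (hh_bound W HW Hreg m Hm Hm1 u Hu 1 ltac:(lra)) as Hh1.
  pose proof (hh_bound W HW Hreg m Hm Hm1 u Hu 0 ltac:(lra)) as Hh0.
  pose proof (pb_hi W HW Hreg y Hy m Hm Hm1 n 1 Hn1 ltac:(lra)) as P1. fold ps b in P1.
  pose proof (pb_lo W HW Hreg y Hy m Hm Hm1 n 0 Hn1 ltac:(lra)) as P0. fold ps b in P0.
  pose proof (frac_bound m b (1 - y) Hm Hb Hbl ltac:(lra)) as F1.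
  pose proof (frac_bound m b y Hm Hb Hbl ltac:(lra)) as F0.
  replace (y - 0 + b) with (y + b) in P0 by ring.
  replace (1 - y + b) with ((1 - y) + b) in P1 by ring.
  assert (T1 : Rabs (hh W u 1 * ps 1) <= 2 / (m * m * (1 - y) ^ 2) * b).
  { rewrite Rabs_mult, (Rabs_right (ps 1)) by lra.
    apply Rle_trans with (/ m * (2 / (m * m * (1 - y) ^ 2) * b * m)).
    - apply Rmult_le_compat; try lra. apply Rabs_pos.
    - right. field. lra. }
  assert (T0 : Rabs (hh W u 0 * (1 - ps 0)) <= 2 / (m * m * y ^ 2) * b).
  { rewrite Rabs_mult, (Rabs_right (1 - ps 0)) by lra.
    apply Rle_trans with (/ m * (2 / (m * m * y ^ 2) * b * m)).
    - apply Rmult_le_compat; try lra. apply Rabs_pos.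
    - right. field. lra. }
  unfold Rminus at 1 2.
  eapply Rle_trans; [apply Rabs_triang|]. rewrite Rabs_Ropp.
  eapply Rle_trans; [apply Rplus_le_compat_r; apply Rabs_triang|]. rewrite Rabs_Ropp.
  eapply Rle_trans; [apply Rplus_le_compat_r, Rplus_le_compat_r; apply Rabs_triang|].
  lra.
Qed.

Lemma RInt_01 (f : R -> R) : ex_RInt f 0 1 -> (forall t, 0 <= t <= 1 -> 0 <= f t <= 1) -> 0 <= RInt f 0 1 <= 1.
Proof.
  intros He H. split.
  - apply Rle_trans with (RInt (fun _ => 0) 0 1).
    + rewrite RInt_const. unfold scal; simpl; unfold mult; simpl. lra.
    + apply RInt_le; [lra| apply ex_RInt_const | auto |]. intros; apply H; lra.
  - apply Rle_trans with (RInt (fun _ => 1) 0 1).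
    + apply RInt_le; [lra| auto | apply ex_RInt_const |]. intros; apply H; lra.
    + rewrite RInt_const. unfold scal; simpl; unfold mult; simpl. lra.
Qed.

Lemma Hstar_eq W (Hreg : regularity_condition W) n y u :
  H_n_star W n y u = Bm n (Dfun W u) (gf n (Dfun W y)) - RInt (psi W y n) 0 1.
Proof. unfold H_n_star. rewrite (condE_X1_eq W (W_exRInt W Hreg)), (c_n_eq W (W_exRInt W Hreg)). reflexivity. Qed.

Lemma part2_bound W (HW : graphon W) (Hreg : regularity_condition W) n y u :
  0 <= y <= 1 -> 0 <= u <= 1 -> Rabs (H_n_star W n y u) <= 1.
Proof.
  intros Hy Hu. rewrite Hstar_eq by auto.
  pose proof (Bm_range n (Dfun W u) (gf n (Dfun W y)) (D_range W HW Hreg u Hu) (gf_range n _)).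
  assert (0 <= RInt (psi W y n) 0 1 <= 1).
  { apply RInt_01. apply exRInt_cont; [lra|]. intros; apply psi_cont; auto.
    intros; apply psi_range; auto. }
  apply Rabs_le. lra.
Qed.

Lemma inv_n_sqrt n : (1 <= n)%nat -> / INR n <= / sqrt (INR n).
Proof. intros Hn. assert (1 <= INR n) by (apply (le_INR 1); auto).
  assert (sqrt (INR n) * sqrt (INR n) = INR n) by (apply sqrt_sqrt; lra).
  assert (1 <= sqrt (INR n)). { rewrite <- sqrt_1. apply sqrt_le_1_alt. lra. }
  apply Rinv_le_contravar. lra. nra. Qed.

Lemma part2_lim W (HW : graphon W) (Hreg : regularity_condition W) y u :
  0 < y < 1 -> 0 <= u <= 1 -> u <> y ->
  is_lim_seq (fun n => H_n_star W n y u) ((if Rle_dec u y then 1 else 0) - y).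
Proof.
  intros Hy Hu Huy.
  destruct (bounds W Hreg) as [m [K1 [K2 [Hm [_ [_ [Hm1 _]]]]]]].
  set (e := m * Rabs (u - y)).
  assert (He : 0 < e) by (unfold e; apply Rmult_lt_0_compat; auto; apply Rabs_pos_lt; lra).
  apply (lim_sqrt _ _ (/ (4 * e^2) + 4 / m)).
  { apply Rplus_le_le_0_compat; apply Rlt_le. apply Rinv_0_lt_compat. apply Rmult_lt_0_compat; [lra| apply pow_lt; lra].
    apply Rdiv_lt_0_compat; lra. }
  intros n Hn.
  assert (Hnp : 0 < INR n) by (apply lt_0_INR; lia).
  rewrite Hstar_eq by auto.
  set (g := gf n (Dfun W y)).
  assert (A : Rabs (Bm n (Dfun W u) g - (if Rle_dec u y then 1 else 0)) <= / (4 * e^2) / sqrt (INR n)).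
  { pose proof (Bm_range n (Dfun W u) g (D_range W HW Hreg u Hu) (gf_range n _)).
    apply Rle_trans with (/ (4 * e^2) * / INR n).
    2:{ apply Rmult_le_compat_l. apply Rlt_le, Rinv_0_lt_compat, Rmult_lt_0_compat; [lra|apply pow_lt; lra].
        apply inv_n_sqrt; auto. }
    replace (/ (4 * e ^ 2) * / INR n) with (/ (4 * INR n * e^2)) by (field; split; lra).
    destruct (Rle_dec u y) as [Hle|Hgt].
    - assert (Hlt : u < y) by lra.
      pose proof (D_incr W Hreg m Hm1 u y ltac:(lra) ltac:(lra) ltac:(lra)).
      assert (Ee : e = m * (y - u)) by (unfold e; rewrite Rabs_left by lra; ring).
      assert (0 < m * (y - u)) by (apply Rmult_lt_0_compat; lra).
      pose proof (cheb_lo n (Dfun W u) (Dfun W y) ltac:(lia) (D_range W HW Hreg u Hu) ltac:(lra)).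
      rewrite Rabs_left1 by lra. rewrite Ee.
      eapply Rle_trans; [|apply Rinv_le_contravar; [|apply Rmult_le_compat_l; [|apply pow_incr; split; [|exact H0]]]].
      + fold g in H2. lra.
      + apply Rmult_lt_0_compat; [lra| apply pow_lt; lra].
      + lra.
      + lra.
    - assert (Hlt : y < u) by lra.
      pose proof (D_incr W Hreg m Hm1 y u ltac:(lra) ltac:(lra) ltac:(lra)).
      assert (Ee : e = m * (u - y)) by (unfold e; rewrite Rabs_right by lra; ring).
      assert (0 < m * (u - y)) by (apply Rmult_lt_0_compat; lra).
      pose proof (cheb_hi n (Dfun W u) (Dfun W y) ltac:(lia) (D_range W HW Hreg u Hu) ltac:(lra)).
      rewrite Rminus_0_r, Rabs_right by lra. rewrite Ee.
      eapply Rle_trans; [|apply Rinv_le_contravar; [|apply Rmult_le_compat_l; [|apply pow_incr; split; [|exact H0]]]].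
      + fold g in H2. lra.
      + apply Rmult_lt_0_compat; [lra| apply pow_lt; lra].
      + lra.
      + lra. }
  assert (B : Rabs (RInt (psi W y n) 0 1 - y) <= 4 / m / sqrt (INR n)).
  { set (ps := psi W y n).
    assert (cps : forall t, continuous ps t) by (intros; apply psi_cont; auto).
    assert (E1 : RInt ps 0 1 = RInt ps 0 y + RInt ps y 1).
    { symmetry. apply (RInt_Chasles (V:=R_CompleteNormedModule)); apply exRInt_cont; try lra; auto. }
    assert (E2 : RInt (fun t => 1 * (ps t - 1)) 0 y = RInt ps 0 y - y).
    { rewrite (RInt_ext_R (fun t => 1 * (ps t - 1)) (fun t => ps t - 1)) by (intros; ring).
      assert (EE : RInt (fun t => ps t - 1) 0 y = RInt ps 0 y - RInt (fun _ => 1) 0 y).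
      { apply (RInt_minus (V:=R_CompleteNormedModule) ps (fun _ => 1) 0 y).
        apply exRInt_cont; try lra; auto. apply ex_RInt_const. }
      rewrite EE. rewrite RInt_const. unfold scal; simpl; unfold mult; simpl. ring. }
    assert (E3 : RInt (fun t => 1 * ps t) y 1 = RInt ps y 1).
    { apply RInt_ext_R. intros; ring. }
    pose proof (tail W HW Hreg y Hy m Hm Hm1 n (fun _ => 1) 1 Hn ltac:(lra) (fun t _ => cR_const 1 t)
                   (fun t _ => ltac:(cbv beta; rewrite Rabs_R1; lra))) as Ht.
    cbv beta in Ht. fold ps in Ht. rewrite E2, E3 in Ht.
    replace (RInt ps 0 1 - y) with ((RInt ps 0 y - y) + RInt ps y 1) by (rewrite E1; ring).
    eapply Rle_trans; [apply Rabs_triang|]. eapply Rle_trans; [exact Ht|].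
    right. unfold bb. field. repeat split; first [lra | apply Rgt_not_eq, sqrt_lt_R0; auto]. }
  replace (Bm n (Dfun W u) g - RInt (psi W y n) 0 1 - ((if Rle_dec u y then 1 else 0) - y))
    with ((Bm n (Dfun W u) g - (if Rle_dec u y then 1 else 0)) - (RInt (psi W y n) 0 1 - y)) by ring.
  unfold Rminus at 1. eapply Rle_trans; [apply Rabs_triang|]. rewrite Rabs_Ropp.
  replace ((/ (4 * e ^ 2) + 4 / m) / sqrt (INR n)) with (/ (4 * e^2) / sqrt (INR n) + 4 / m / sqrt (INR n))
    by (field; repeat split; first [lra | apply Rgt_not_eq, sqrt_lt_R0; auto]).
  lra.
Qed.

Theorem proposition8p2 (W : R -> R -> R)
  (HW : graphon W) (Hreg : regularity_condition W) :
  (forall y, 0 < y < 1 ->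
     exists C, 0 < C /\
       forall (n : nat) (u : R), (2 <= n)%nat -> 0 <= u <= 1 ->
         Rabs (H_n W n y u - (Dfun W y - W y u) / Derive (Dfun W) y)
           <= C * Rpower (INR n) (- (1/4))) /\
  (forall y u, 0 < y < 1 -> 0 <= u <= 1 -> u <> y ->
     (forall n : nat, (2 <= n)%nat -> Rabs (H_n_star W n y u) <= 1) /\
     is_lim_seq (fun n => H_n_star W n y u)
                ((if Rle_dec u y then 1 else 0) - y)).
Proof.
  split.
  - intros y Hy.
    destruct (bounds W Hreg) as [m [K1 [K2 [Hm [HK1 [HK2 [Hm1 [HW1 [HD1 HD2]]]]]]]]].
    set (Mh := ((K1 + K1) * K1 + 1 * K2) / (m * m)).
    assert (HMh : 0 <= Mh).
    { unfold Mh. apply Rmult_le_pos; [nra|]. apply Rlt_le, Rinv_0_lt_compat; nra. }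
    pose proof (hd_bound W HW Hreg m K1 K2 Hm Hm1 HW1 HD1 HD2) as Hhd. fold Mh in Hhd.
    set (Cst := 2 / (m * m * (1 - y)^2) + 2 / (m * m * y^2) + 8 * Mh).
    assert (HC : 0 <= Cst).
    { unfold Cst. assert (0 < (1 - y)^2) by (apply pow_lt; lra). assert (0 < y^2) by (apply pow_lt; lra).
      assert (0 < m * m) by nra.
      assert (0 <= 2 / (m * m * (1 - y)^2)) by (apply Rlt_le, Rdiv_lt_0_compat; [lra| nra]).
      assert (0 <= 2 / (m * m * y^2)) by (apply Rlt_le, Rdiv_lt_0_compat; [lra| nra]). lra. }
    exists (Cst * / (2 * m) + 1). split.
    { assert (0 <= Cst * / (2 * m)) by (apply Rmult_le_pos; [lra| apply Rlt_le, Rinv_0_lt_compat; lra]). lra. }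
    intros n u Hn Hu.
    eapply Rle_trans; [apply (part1 W HW Hreg y Hy m Hm Hm1 Mh HMh Hhd n u Hn Hu)|]. fold Cst.
    assert (Hn1 : (1 <= n)%nat) by lia.
    pose proof (rpower_bound n Hn1) as Hrp.
    assert (Hsq : 0 < sqrt (INR n)) by (apply sqrt_lt_R0, lt_0_INR; lia).
    assert (Hbb : bb m n = / (2 * m) * / sqrt (INR n)) by (unfold bb; field; split; lra).
    rewrite Hbb.
    assert (Hrpos : 0 < Rpower (INR n) (- (1/4))) by (unfold Rpower; apply exp_pos).
    assert (0 < / (2 * m)) by (apply Rinv_0_lt_compat; lra).
    apply Rle_trans with (/ (2 * m) * Rpower (INR n) (- (1/4)) * Cst).
    + apply Rmult_le_compat_r; auto. apply Rmult_le_compat_l; lra.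
    + nra.
  - intros y u Hy Hu Huy. split.
    + intros n Hn. apply part2_bound; auto; lra.
    + apply part2_lim; auto.
Qed.
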